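(* The following semigroups have matricial dimension $2$: (a) the cyclic semigroups $\langle a \rangle = \{0, a, 2a, 3a, \ldots\}$ with $a \geq 2$; (b) the ordinary semigroups $S_b = \{0\} \cup \{b,b+1,b+2,\ldots\}$ with $b \geq 2$; (c) the unions $\langle a \rangle \cup S_b$ with $a,b\geq 2$.
   Context: $\mathbb{N} = \{0,1,2,\ldots\}$. A semigroup means an additive subsemigroup of $\mathbb{N}$ containing $0$; $\langle\cdot\rangle$ denotes the semigroup generated by the indicated elements. $\mathsf{M}_d(X)$ denotes the $d\times d$ matrices with entries in $X$. For $A \in \mathsf{M}_d(\mathbb{Q})$, $\mathcal{S}(A) = \{ n \in \mathbb{N} : A^n \in \mathsf{M}_d(\mathbb{Z})\}$. The matricial dimension $\dim_{\mathrm{mat}} S$ of a semigroup $S$ is the smallest $d$ such that $S = \mathcal{S}(A)$ for some $A \in \mathsf{M}_d(\mathbb{Q})$. *)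

(* Defs.v *)
From HB Require Import structures.
From mathcomp Require Import all_boot all_order all_algebra.
Set Implicit Arguments. Unset Strict Implicit. Unset Printing Implicit Defensive.
Import Order.TTheory GRing.Theory Num.Theory.
Local Open Scope ring_scope.

Definition Sof (d : nat) (A : 'M[rat]_d) : pred nat :=
  fun n => [forall i, forall j, (A ^+ n) i j \is a Num.int].

Definition realizable (S : pred nat) (d : nat) : Prop :=
  exists A : 'M[rat]_d, S =1 Sof A.

Definition matdim_is (S : pred nat) (d : nat) : Prop :=
  realizable S d /\ (forall d', (d' < d)%N -> ~ realizable S d').

Definition cyclic_sg (a : nat) : pred nat := fun n => (a %| n)%N.

Definition ordinary_sg (b : nat) : pred nat := fun n => (n == 0)%N || (b <= n)%N.

Definition union_sg (a b : nat) : pred nat :=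
  fun n => cyclic_sg a n || ordinary_sg b n.

(* Main.v *)
Require Import Defs.
From mathcomp Require Import all_boot all_order all_algebra.
From HB Require Import structures.
From mathcomp Require Import zify ring lra.
Set Implicit Arguments. Unset Strict Implicit. Unset Printing Implicit Defensive.
Import Order.TTheory GRing.Theory Num.Theory.


Lemma binom_lin (u k : nat) : exists w, ((1 + u) ^ k = 1 + k * u + u ^ 2 * w)%N.
Proof.
elim: k => [|k [w IH]]; first by exists 0%N; rewrite expn0 mul0n muln0.
exists (k + w + w * u)%N; rewrite expnS IH. rewrite !expnS expn0. ring.
Qed.

Lemma lift_pow (m j : nat) : exists t, ((1 + m) ^ (m ^ j) = 1 + m ^ j.+1 * t)%N.
Proof.
elim: j => [|j [t IH]]; first by exists 1%N; rewrite !expn0 expn1 muln1.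
have [w Hw] := binom_lin (m ^ j.+1 * t) m.
exists (t + m ^ j * t ^ 2 * w)%N.
rewrite expnS mulnC expnM IH Hw !expnS. ring.
Qed.

Lemma dvd_pow_sub1 (u k : nat) : (u %| (1 + u) ^ k - 1)%N.
Proof.
have [w ->] := binom_lin u k.
rewrite -addnA addKn; apply: dvdn_add; first exact: dvdn_mull.
by apply: dvdn_mulr; rewrite (expnS u 1); apply: dvdn_mulr.
Qed.

Lemma binom_lin' (u k : nat) : exists s, ((1 + u) ^ k = 1 + u * s)%N.
Proof. have [w ->] := binom_lin u k. exists (k + u * w)%N. rewrite !expnS expn0. ring. Qed.

Lemma order_lem (a k : nat) : (2 <= a)%N -> (a ^ a - 1 %| a ^ k - 1)%N -> (a %| k)%N.
Proof.
move=> a2 H.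
set m := (a ^ a - 1)%N in H.
have am : (a ^ a = 1 + m)%N.
  rewrite /m; have : (0 < a ^ a)%N by rewrite expn_gt0; lia.
  lia.
rewrite (divn_eq k a) in H *.
set q := (k %/ a)%N in H *; set r := (k %% a)%N in H *.
have ra : (r < a)%N by rewrite /r ltn_mod; lia.
have [s Hs] := binom_lin' m q.
have E : (a ^ (q * a + r) - 1 = (a ^ r - 1) + m * (s * a ^ r))%N.
  rewrite expnD (mulnC q a) expnM am Hs.
  have : (0 < a ^ r)%N by rewrite expn_gt0; lia.
  move=> hp. rewrite mulnDl mul1n. rewrite mulnA. lia.
rewrite E in H.
have H2 : (m %| a ^ r - 1)%N by rewrite (dvdn_addl _ (dvdn_mulr _ (dvdnn m))) in H.
have lt : (a ^ r - 1 < m)%N.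
  have : (a ^ r < a ^ a)%N by rewrite ltn_exp2l //; lia.
  rewrite /m; lia.
have z : (a ^ r - 1 = 0)%N.
  case E0: (a ^ r - 1)%N => [//|n]; rewrite E0 in H2 lt.
  have := dvdn_leq (ltn0Sn n) H2. lia.
have r0 : r = 0%N.
  case: r z {ra E H H2 lt} => // r'. rewrite expnS.
  have : (0 < a ^ r')%N by rewrite expn_gt0; lia.
  move=> h; nia.
by rewrite r0 addn0 dvdn_mull.
Qed.

Lemma coprime_am (a : nat) : (2 <= a)%N -> coprime a (a ^ a - 1).
Proof.
move=> a2; rewrite /coprime -dvdn1.
have h1 : (gcdn a (a ^ a - 1) %| a ^ a)%N.
  apply: dvdn_trans (dvdn_gcdl _ _) _. rewrite -{1}(expn1 a) dvdn_exp2l //; lia.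
have h2 := dvdn_gcdr a (a ^ a - 1).
have := dvdn_sub h1 h2.
have : (0 < a ^ a)%N by rewrite expn_gt0; lia.
move=> p; have -> : (a ^ a - (a ^ a - 1) = 1)%N by lia.
done.
Qed.

Lemma key_c (a b n : nat) : (2 <= a)%N -> (1 <= b)%N ->
  let m := (a ^ a - 1)%N in let x := (a ^ (m ^ b.-1))%N in
  (m ^ b %| m ^ n * (x ^ n - 1))%N = (a %| n) || (b <= n)%N.
Proof.
move=> a2 b1 m x.
have am : (a ^ a = 1 + m)%N.
  rewrite /m; have : (0 < a ^ a)%N by rewrite expn_gt0; lia.
  lia.
have m0 : (0 < m)%N.
  rewrite /m; have : (a ^ 1 < a ^ a)%N by rewrite ltn_exp2l //; lia.
  rewrite expn1; lia.
apply/idP/idP.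
  move=> H; have [bn|nb] := leqP b n; first by apply/orP; right.
  rewrite orbF.
  have Hb : (m ^ b = m ^ n * m ^ (b - n))%N by rewrite -expnD; congr (_ ^ _); lia.
  rewrite Hb dvdn_pmul2l ?expn_gt0 ?m0 // in H.
  have H1 : (m %| x ^ n - 1)%N.
    apply: dvdn_trans H. rewrite -{1}(expn1 m) dvdn_exp2l //; lia.
  rewrite /x -expnM in H1.
  have := order_lem a2 H1.
  rewrite Gauss_dvdr //. apply: coprimeXr. exact: coprime_am.
case/orP => H.
  case/dvdnP: H => k ->.
  have [t Ht] := lift_pow m b.-1.
  have -> : (x ^ (k * a) = (1 + m ^ b * t) ^ k)%N.
    rewrite /x -!expnM.
    have -> : (m ^ b.-1 * (k * a) = a * m ^ b.-1 * k)%N by ring.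
    rewrite !expnM am Ht prednK //.
  apply: dvdn_mull; apply: dvdn_trans (dvd_pow_sub1 _ _). exact: dvdn_mulr.
apply: dvdn_mulr. by rewrite dvdn_exp2l.
Qed.
Local Open Scope ring_scope.

Definition tri (al ga be : rat) : 'M[rat]_2 :=
  \matrix_(i < 2, j < 2) if (i == 0 :> nat) then (if (j == 0 :> nat) then al else 0)
                         else (if (j == 0 :> nat) then ga else be).

Lemma tri_mul al ga be al' ga' be' :
  tri al ga be * tri al' ga' be' = tri (al * al') (ga * al' + be * ga') (be * be').
Proof.
apply/matrixP => i j; rewrite -mulmxE !mxE !big_ord_recr big_ord0 /= !mxE /=.
case: i => [[|[|i]] Hi] //=; case: j => [[|[|j]] Hj] //=; ring.
Qed.

Lemma tri_exp al ga be (g : nat -> rat) :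
  g 0%N = 0 -> (forall n, g n.+1 = g n * al + be ^+ n * ga) ->
  forall n, tri al ga be ^+ n = tri (al ^+ n) (g n) (be ^+ n).
Proof.
move=> g0 gS; elim => [|n IH].
  rewrite !expr0 g0; apply/matrixP => i j; rewrite !mxE.
  by case: i => [[|[|i]] Hi] //=; case: j => [[|[|j]] Hj].
by rewrite exprSr IH tri_mul gS !exprSr.
Qed.

Lemma Sof_tri al g be n : Sof (tri al g be) n = true <->
  [/\ al \is a Num.int, g \is a Num.int & be \is a Num.int] -> True.
Abort.

Lemma Sof_tri_ex al ga be (g : nat -> rat) :
  g 0%N = 0 -> (forall n, g n.+1 = g n * al + be ^+ n * ga) ->
  forall n, Sof (tri al ga be) n =
   [&& al ^+ n \is a Num.int, g n \is a Num.int & be ^+ n \is a Num.int].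
Proof.
move=> g0 gS n; rewrite /Sof (tri_exp g0 gS).
apply/forallP/and3P.
  move=> H; split.
  - by have := forallP (H ord0) ord0; rewrite mxE.
  - by have := forallP (H ord_max) ord0; rewrite mxE.
  - by have := forallP (H ord_max) ord_max; rewrite mxE.
case=> h1 h2 h3 i; apply/forallP => j; rewrite mxE.
by case: i => [[|[|i]] Hi] //=; case: j => [[|[|j]] Hj].
Qed.

Lemma Qint_nat_div (k d : nat) : (0 < d)%N ->
  ((k%:R / d%:R : rat) \is a Num.int) = (d %| k)%N.
Proof.
move=> d0; apply/idP/idP; last first.
  by move=> h; have := Qnat_dvd h; rewrite natrEint => /andP[].
case/intrP => z hz.
have : (k%:R : rat) = z%:~R * d%:R.
  by rewrite -hz mulfVK // pnatr_eq0 -lt0n.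
rewrite !pmulrn -intrM => /intr_inj hk.
have : (d%:Z %| k%:Z)%Z by rewrite hk dvdz_mull.
done.
Qed.

Lemma Qint_pow (q : rat) n : (0 < n)%N -> q ^+ n \is a Num.int -> q \is a Num.int.
Proof.
move=> n0 /intrP [k hk].
have e : ((numq q) ^+ n)%:~R = (k * (denq q) ^+ n)%:~R :> rat.
  rewrite rmorphM /= !rmorphXn /= numqE exprMn hk //.
move/intr_inj: e => e.
have hd : (denq q %| (numq q) ^+ n)%Z.
  rewrite e; apply: dvdz_mull; exact: dvdz_exp.
have cop : coprimez (denq q) ((numq q) ^+ n).
  apply: coprimezXr; rewrite coprimezE coprime_sym; exact: coprime_num_den.
have : (denq q %| 1)%Z.
  by rewrite -(Gauss_dvdzr 1 cop) mulr1.
rewrite dvdz1 Qint_def => h.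
have := denq_gt0 q. move: h. case: (denq q) => [[|[|p]]|p] //.
Qed.

Lemma mx1_exp (A : 'M[rat]_1) n : (A ^+ n) ord0 ord0 = (A ord0 ord0) ^+ n.
Proof.
elim: n => [|n IH]; first by rewrite !expr0 mxE.
by rewrite !exprSr -mulmxE mxE big_ord1 IH.
Qed.

Lemma low (S : pred nat) n0 : S 1%N = false -> S n0 -> (0 < n0)%N ->
  forall d', (d' < 2)%N -> ~ realizable S d'.
Proof.
move=> S1 Sn0 n0p [|[|//]] _ [A HA].
  have : Sof A 1%N by apply/forallP => -[i Hi].
  by rewrite -HA S1.
have h1 : (A ord0 ord0) ^+ n0 \is a Num.int.
  move: Sn0; rewrite HA => /forallP /(_ ord0) /forallP /(_ ord0).
  by rewrite mx1_exp.
have h2 := Qint_pow n0p h1.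
have : Sof A 1%N.
  apply/forallP => i; apply/forallP => j.
  by rewrite (ord1 i) (ord1 j) expr1.
by rewrite -HA S1.
Qed.

Lemma real_a (a : nat) : (2 <= a)%N -> realizable (cyclic_sg a) 2.
Proof.
move=> a2; exists (tri 1 (a%:R)^-1 1) => n.
have a0 : (a%:R : rat) != 0 by rewrite pnatr_eq0; lia.
pose g (n : nat) : rat := n%:R / a%:R.
rewrite (@Sof_tri_ex _ _ _ g); last first.
- by move=> k; rewrite /g expr1n mulr1 mul1r -natr1 mulrDl mul1r.
- by rewrite /g mul0r.
rewrite expr1n /= /g Qint_nat_div; last lia.
by rewrite andbT.
Qed.

Lemma real_b (b : nat) : (2 <= b)%N -> realizable (ordinary_sg b) 2.
Proof.
move=> b2; exists (tri 0 ((2 ^ b.-1)%:R)^-1 2) => n.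
pose g (n : nat) : rat := if n is n'.+1 then (2 ^ n')%:R / (2 ^ b.-1)%:R else 0.
rewrite (@Sof_tri_ex _ _ _ g) //; last first.
  by move=> k; rewrite /g; case: k => [|k]; rewrite ?mulr0 ?add0r // natrX.
have h0 : (0 : rat) ^+ n \is a Num.int by rewrite expr0n; case: (n == 0%N).
have h2 : (2 : rat) ^+ n \is a Num.int by rewrite rpredX.
rewrite h0 h2 andbT /= /ordinary_sg /g.
case: n {h0 h2} => [|n] //=.
rewrite Qint_nat_div ?expn_gt0 // dvdn_Pexp2l //; lia.
Qed.

Lemma real_c (a b : nat) : (2 <= a)%N -> (2 <= b)%N -> realizable (union_sg a b) 2.
Proof.
move=> a2 b2.
pose m := (a ^ a - 1)%N; pose x := (a ^ (m ^ b.-1))%N.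
have m0 : (0 < m)%N.
  rewrite /m; have : (a ^ 1 < a ^ a)%N by rewrite ltn_exp2l //; lia.
  rewrite expn1; lia.
have x0 : (0 < x)%N by rewrite /x expn_gt0; lia.
have N0 : (m%:R : rat) ^+ b != 0 by rewrite expf_neq0 // pnatr_eq0; lia.
exists (tri (m%:R) (m%:R * (x%:R - 1) / (m%:R) ^+ b) (m%:R * x%:R)) => n.
pose g (n : nat) : rat := (m%:R)^+n * ((x%:R)^+n - 1) / (m%:R) ^+ b.
rewrite (@Sof_tri_ex _ _ _ g); last first.
- move=> k; rewrite /g !exprS exprMn. field. exact: N0.
- by rewrite /g !expr0 subrr mulr0 mul0r.
rewrite !rpredX //=; last by rewrite -natrM.
rewrite andbT.
have -> : g n = (m ^ n * (x ^ n - 1))%:R / (m ^ b)%:R.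
  rewrite /g natrM [(x ^ n - 1)%:R]natrB; last by rewrite expn_gt0 x0.
  by rewrite !natrX.
rewrite (@Qint_nat_div (m ^ n * (x ^ n - 1)) (m ^ b)); last by rewrite expn_gt0 m0.
have K := @key_c a b n a2 (ltnW b2); simpl in K.
rewrite /x /m K.
rewrite /union_sg /cyclic_sg /ordinary_sg.
case: n K => [|n] _; first by rewrite dvdn0.
by [].
Qed.

Theorem theorem2p8 :
  (forall a : nat, (2 <= a)%N -> matdim_is (cyclic_sg a) 2) /\
  (forall b : nat, (2 <= b)%N -> matdim_is (ordinary_sg b) 2) /\
  (forall a b : nat, (2 <= a)%N -> (2 <= b)%N -> matdim_is (union_sg a b) 2).
Proof.
split; [|split].
- move=> a a2; split; first exact: real_a.
  apply: (@low _ a).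
  + rewrite /cyclic_sg dvdn1; apply/negbTE; lia.
  + exact: dvdnn.
  + lia.
- move=> b b2; split; first exact: real_b.
  apply: (@low _ b).
  + rewrite /ordinary_sg; apply/negbTE; lia.
  + by rewrite /ordinary_sg leqnn orbT.
  + lia.
- move=> a b a2 b2; split; first exact: real_c.
  apply: (@low _ a).
  + rewrite /union_sg /cyclic_sg /ordinary_sg dvdn1; apply/negbTE; lia.
  + by rewrite /union_sg /cyclic_sg dvdnn.
  + lia.
Qed.
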